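(* In the setup of the context, for all $x,y,z\in B$: (a) if $\gamma_{x,y,z}\neq0$, then $t_x\sim_{\mathcal L}t_y^\ast$, $t_y\sim_{\mathcal L}t_z^\ast$ and $t_z\sim_{\mathcal L}t_x^\ast$ (left cells of $J$ with respect to the basis $(t_w)$); (b) if $t_x\sim_{\mathcal L}t_y$ in $J$, then $x\sim_{\mathcal L}y$ in $H$ (left cells of $H$ with respect to $B$); hence the partition of $B$ into $J$-left cells refines the partition into $H$-left cells; (c) the analogous statements of (b) hold for right cells and two-sided cells; (d) $t_x\sim_{\mathcal{LR}}t_x^\ast$.
   Context: Cells: for a ring $A$ acting on a module $M$ (left, right, or two-sided) which is free over the base ring $k$ with basis $C$, write $c\leftarrow c'$ if there is $h$ in $A$ (resp. a product $hc'h'$ in the bimodule case) such that $c$ occurs with nonzero coefficient in the expansion of $hc'$ (resp. $c'h$, $hc'h'$) in the basis $C$; $\preceq$ is the transitive closure of $\leftarrow$, and cells are the classes of the equivalence relation $c\sim c'\iff c\preceq c'\preceq c$. $\sim_{\mathcal L}$, $\sim_{\mathcal R}$, $\sim_{\mathcal{LR}}$ refer to the regular left, right and bimodule. Setup: $\Gamma$ totally ordered abelian group; $K$ field with surjective valuation $\nu$, valuation ring $\mathcal O$, maximal ideal $\mathfrak m$, formally real residue field $F$; $H$ finite-dimensional split semisimple symmetric $K$-algebra with trace $\tau$, $K$-linear involutive antiautomorphism $\ast$, $\ast$-symmetric basis $B$ ($B^\ast=B$, $\tau(bc^\ast)=\delta_{bc}$). With Schur elements $c_\lambda$ ($\tau=\sum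 c_\lambda^{-1}\chi_\lambda$), $a_\lambda=-\tfrac12\nu(c_\lambda)\in\Gamma$, a homomorphism $\gamma\mapsto v^\gamma$ on $\langle a_\lambda\rangle$ with $\nu(v^\gamma)=\gamma$, $f_\lambda=v^{2a_\lambda}c_\lambda$, balanced representations $\rho_\lambda$ (irreducible of type $\lambda$, $\nu(\rho_\lambda(b))\ge-a_\lambda$ for $b$ in every $\ast$-symmetric basis) and $c^\lambda(x)=v^{a_\lambda}\rho_\lambda(x)\bmod\mathfrak m$, set $\gamma_{x,y,z}=\sum_\lambda\sum_{\mathfrak{s,t,u}}f_\lambda^{-1}c^\lambda(x)_{\mathfrak{st}}c^\lambda(y)_{\mathfrak{tu}}c^\lambda(z)_{\mathfrak{us}}\in F$. $J$ is the $F$-algebra with basis $(t_x)_{x\in B}$ and product $t_xt_y=\sum_z\gamma_{x,y,z}t_{z^\ast}$, with $t_x^\ast:=t_{x^\ast}$. *)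

(* Defs.v *)
From HB Require Import structures.
From mathcomp Require Import all_boot all_order all_algebra all_field.
From Stdlib Require Import Relation_Operators.
Set Implicit Arguments. Unset Strict Implicit. Unset Printing Implicit Defensive.
Import Order.TTheory GRing.Theory Num.Theory.
Local Open Scope ring_scope.

Definition ordered_abelian_group (G : zmodType) (leG : rel G) : Prop :=
  [/\ reflexive leG, antisymmetric leG, transitive leG,
      (forall x y, leG x y || leG y x) &
      (forall x y z, leG x y -> leG (x + z) (y + z))].

(* nu 0 is irrelevant (stands for +infinity). *)
Definition surj_valuation (K : fieldType) (G : zmodType) (leG : rel G)
    (nu : K -> G) : Prop :=
  [/\ (forall x y, x != 0 -> y != 0 -> nu (x * y) = nu x + nu y),
      (forall x y, x != 0 -> y != 0 -> x + y != 0 ->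
          leG (nu x) (nu (x + y)) || leG (nu y) (nu (x + y))) &
      (forall g, exists x, x != 0 /\ nu x = g)].

Definition valO (K : fieldType) (G : zmodType) (leG : rel G) (nu : K -> G) :
  pred K := fun x => (x == 0) || leG 0 (nu x).
Definition valm (K : fieldType) (G : zmodType) (leG : rel G) (nu : K -> G) :
  pred K := fun x => (x == 0) || (leG 0 (nu x) && (nu x != 0)).

(* "nu x >= g" with the convention nu 0 = +infinity *)
Definition val_ge (K : fieldType) (G : zmodType) (leG : rel G) (nu : K -> G)
  (x : K) (g : G) : Prop := x = 0 \/ leG g (nu x).

(* pi : O -> F is a surjective ring morphism with kernel m, i.e. F = O/m
   is the residue field (pi is only meaningful on O). *)
Definition residue_map (K F : fieldType) (G : zmodType) (leG : rel G)
    (nu : K -> G) (pi : K -> F) : Prop :=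
  [/\ {in valO leG nu &, forall x y, pi (x + y) = pi x + pi y},
      {in valO leG nu &, forall x y, pi (x * y) = pi x * pi y},
      pi 1 = 1,
      {in valO leG nu, forall x, (pi x == 0) = (x \in valm leG nu)} &
      (forall f : F, exists2 x, x \in valO leG nu & pi x = f)].

Definition formally_real (F : fieldType) : Prop :=
  forall s : seq F, \sum_(x <- s) x ^+ 2 != -1.

Definition is_trace_form (K : fieldType) (H : falgType K) (tau : H -> K) :=
  [/\ (forall (a : K) (u v : H), tau (a *: u + v) = a * tau u + tau v),
      (forall u v : H, tau (u * v) = tau (v * u)) &
      (forall u : H, (forall v, tau (u * v) = 0) -> u = 0)].

Definition is_lin_invol_antiaut (K : fieldType) (H : falgType K)
    (star : H -> H) :=
  [/\ (forall (a : K) (u v : H), star (a *: u + v) = a *: star u + star v),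
      (forall u v : H, star (u * v) = star v * star u) &
      involutive star].

Definition star_sym_basis (K : fieldType) (H : falgType K) (tau : H -> K)
    (star : H -> H) (B : seq H) : Prop :=
  [/\ basis_of fullv B,
      {in B, forall b, star b \in B} &
      {in B &, forall b c, tau (b * star c) = (b == c)%:R}].

Definition is_repr (K : fieldType) (H : falgType K) (d : nat)
    (rho : H -> 'M[K]_d) : Prop :=
  [/\ (forall (a : K) (u v : H), rho (a *: u + v) = a *: rho u + rho v),
      (forall u v : H, rho (u * v) = rho u *m rho v) &
      rho 1 = 1%:M].

(* c^lambda(x) = v^{a_lambda} rho_lambda(x) mod m *)
Definition clam (K F : fieldType) (H : falgType K) (pi : K -> F)
   (d : nat) (rho : H -> 'M[K]_d) (va : K) (x : H) : 'M[F]_d :=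
  \matrix_(s, t) pi (va * rho x s t).

(* f_lambda = v^{2 a_lambda} c_lambda, v2a stands for v^{2 a_lambda} *)
Definition gammaJ (K F : fieldType) (H : falgType K) (pi : K -> F)
   (L : finType) (d : L -> nat) (rho : forall l, H -> 'M[K]_(d l))
   (va v2a c : L -> K) (x y z : H) : F :=
  \sum_(l : L) \sum_(s < d l) \sum_(t < d l) \sum_(u < d l)
     (pi (v2a l * c l))^-1 * clam pi (rho l) (va l) x s t
       * clam pi (rho l) (va l) y t u * clam pi (rho l) (va l) z u s.

Definition cells_of (I : Type) (step : I -> I -> Prop) (i j : I) : Prop :=
  clos_trans I step i j /\ clos_trans I step j i.

Definition H_left_step (K : fieldType) (H : falgType K) (n : nat)
  (B : n.-tuple H) (i j : 'I_n) : Prop :=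
  exists h : H, coord B i (h * tnth B j) != 0.
Definition H_right_step (K : fieldType) (H : falgType K) (n : nat)
  (B : n.-tuple H) (i j : 'I_n) : Prop :=
  exists h : H, coord B i (tnth B j * h) != 0.
Definition H_twosided_step (K : fieldType) (H : falgType K) (n : nat)
  (B : n.-tuple H) (i j : 'I_n) : Prop :=
  exists h h' : H, coord B i (h * tnth B j * h') != 0.

(* J: elements are coordinate vectors (w |-> coefficient of t_w),
   product t_x t_y = sum_z gam x y z t_{st z} (st z = index of z^* ). *)
Definition Jmul (F : fieldType) (n : nat) (st : 'I_n -> 'I_n)
  (gam : 'I_n -> 'I_n -> 'I_n -> F) (a b : 'I_n -> F) : 'I_n -> F :=
  fun w => \sum_(x < n) \sum_(y < n) \sum_(z < n)
             (if st z == w then a x * b y * gam x y z else 0).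
Definition tJ (F : fieldType) (n : nat) (x : 'I_n) : 'I_n -> F :=
  fun w => (w == x)%:R.

Definition J_left_step (F : fieldType) (n : nat) (st : 'I_n -> 'I_n)
  (gam : 'I_n -> 'I_n -> 'I_n -> F) (i j : 'I_n) : Prop :=
  exists h : 'I_n -> F, Jmul st gam h (tJ F j) i != 0.
Definition J_right_step (F : fieldType) (n : nat) (st : 'I_n -> 'I_n)
  (gam : 'I_n -> 'I_n -> 'I_n -> F) (i j : 'I_n) : Prop :=
  exists h : 'I_n -> F, Jmul st gam (tJ F j) h i != 0.
Definition J_twosided_step (F : fieldType) (n : nat) (st : 'I_n -> 'I_n)
  (gam : 'I_n -> 'I_n -> 'I_n -> F) (i j : 'I_n) : Prop :=
  exists h h' : 'I_n -> F, Jmul st gam (Jmul st gam h (tJ F j)) h' i != 0.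

Definition in_agrp (G : zmodType) (L : finType) (a : L -> G) (g : G) : Prop :=
  exists k : L -> int, g = \sum_(l : L) a l *~ k l.

(* Main.v *)
Require Import Defs.
From HB Require Import structures.
From mathcomp Require Import all_boot all_order all_algebra all_field.
From Stdlib Require Import Relation_Operators Classical.
From mathcomp Require Import ring.
Set Implicit Arguments. Unset Strict Implicit. Unset Printing Implicit Defensive.
Import Order.TTheory GRing.Theory Num.Theory.
Local Open Scope ring_scope.

Section Main.
Variables (G : zmodType) (leG : rel G) (hG : ordered_abelian_group leG)
  (K : fieldType) (nu : K -> G) (hnu : surj_valuation leG nu)
  (F : fieldType) (pi : K -> F) (hpi : residue_map leG nu pi).

Let leGrefl : reflexive leG. Proof. by case: hG. Qed.
Let leGtrans : transitive leG. Proof. by case: hG. Qed.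
Let leGtot x y : leG x y || leG y x. Proof. by case: hG. Qed.
Let leGD x y z : leG x y -> leG (x + z) (y + z). Proof. by case: hG => _ _ _ _ h; apply: h. Qed.
Let nuM x y : x != 0 -> y != 0 -> nu (x * y) = nu x + nu y. Proof. by case: hnu => h _ _; apply: h. Qed.
Let nuD x y : x != 0 -> y != 0 -> x + y != 0 ->
          leG (nu x) (nu (x + y)) || leG (nu y) (nu (x + y)). Proof. by case: hnu => _ h _; apply: h. Qed.

Lemma leG_add0 x y : leG 0 x -> leG 0 y -> leG 0 (x + y).
Proof. move=> hx hy; apply: leGtrans (leGD y hx); by rewrite add0r. Qed.

Lemma leG_subr x y : leG x y -> leG 0 (y - x).
Proof. by move=> h; have := leGD (- x) h; rewrite subrr. Qed.

Lemma leG_opp x : leG x 0 -> leG 0 (- x).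
Proof. by move=> h; have := leG_subr h; rewrite sub0r. Qed.

Lemma nu1 : nu 1 = 0.
Proof. have := nuM (oner_neq0 K) (oner_neq0 K); rewrite mulr1 => h.
by apply: (addrI (nu 1)); rewrite addr0 -h. Qed.

Lemma nuV x : x != 0 -> nu x^-1 = - nu x.
Proof. move=> x0; have := nuM x0 (invr_neq0 x0); rewrite mulfV // nu1 => h.
by apply/eqP; rewrite -addr_eq0 addrC -h. Qed.

Notation O := (valO leG nu).

Lemma O0 : (0 : K) \in O. Proof. by rewrite unfold_in /valO eqxx. Qed.
Lemma O1 : (1 : K) \in O. Proof. by rewrite unfold_in /valO nu1 leGrefl orbT. Qed.

Lemma OP x : reflect (x = 0 \/ leG 0 (nu x)) (x \in O).
Proof. rewrite unfold_in /valO; apply: (iffP orP) => -[/eqP|]; by auto. Qed.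

Lemma OD x y : x \in O -> y \in O -> x + y \in O.
Proof.
move=> /OP[->|hx]; first by rewrite add0r.
move=> /OP[->|hy]; first by rewrite addr0; apply/OP; right.
have [-> | x0] := eqVneq x 0; first by rewrite add0r; apply/OP; right.
have [-> | y0] := eqVneq y 0; first by rewrite addr0; apply/OP; right.
have [-> | s0] := eqVneq (x + y) 0; first exact: O0.
apply/OP; right; case/orP: (nuD x0 y0 s0) => h; exact: leGtrans h.
Qed.

Lemma OM x y : x \in O -> y \in O -> x * y \in O.
Proof.
move=> /OP[->|hx]; first by rewrite mul0r O0.
move=> /OP[->|hy]; first by rewrite mulr0 O0.
have [-> | x0] := eqVneq x 0; first by rewrite mul0r O0.
have [-> | y0] := eqVneq y 0; first by rewrite mulr0 O0.
by apply/OP; right; rewrite nuM //; apply: leG_add0.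
Qed.

Let piD : {in O &, forall x y, pi (x + y) = pi x + pi y}. Proof. by case: hpi => h _ _ _ _. Qed.
Let piM : {in O &, forall x y, pi (x * y) = pi x * pi y}. Proof. by case: hpi => _ h _ _ _. Qed.
Lemma pi1 : pi 1 = 1. Proof. by case: hpi => _ _ h _ _. Qed.
Lemma pi0 : pi 0 = 0.
Proof. have := piD O0 O0; rewrite addr0 => h.
by apply: (addrI (pi 0)); rewrite addr0 -h. Qed.

Lemma O_sum (I : Type) (r : seq I) (P : pred I) (E : I -> K) :
  (forall i, P i -> E i \in O) ->
  \sum_(i <- r | P i) E i \in O /\ pi (\sum_(i <- r | P i) E i) = \sum_(i <- r | P i) pi (E i).
Proof.
move=> hE; elim: r => [|x r [IH1 IH2]]; first by rewrite !big_nil O0 pi0.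
rewrite !big_cons; case: ifP => // Px; split; first exact: OD (hE _ Px) IH1.
by rewrite piD ?IH2 // ?hE.
Qed.


Lemma O_sumO (I : Type) (r : seq I) (P : pred I) (E : I -> K) :
  (forall i, P i -> E i \in O) -> \sum_(i <- r | P i) E i \in O.
Proof. by move=> hE; case: (O_sum r hE). Qed.
Lemma pi_sum (I : Type) (r : seq I) (P : pred I) (E : I -> K) :
  (forall i, P i -> E i \in O) -> pi (\sum_(i <- r | P i) E i) = \sum_(i <- r | P i) pi (E i).
Proof. by move=> hE; case: (O_sum r hE). Qed.
Lemma piMO x y : x \in O -> y \in O -> pi (x * y) = pi x * pi y.
Proof. by move=> hx hy; apply: piM. Qed.
Lemma piDO x y : x \in O -> y \in O -> pi (x + y) = pi x + pi y.
Proof. by move=> hx hy; apply: piD. Qed.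
Variables (H : falgType K) (tau : H -> K) (htau : is_trace_form tau)
  (star : H -> H) (hstar : is_lin_invol_antiaut star)
  (n : nat) (B : n.-tuple H) (hB : star_sym_basis tau star B)
  (st : 'I_n -> 'I_n) (hst : forall i, star (tnth B i) = tnth B (st i))
  (L : finType) (d : L -> nat) (rho : forall l, H -> 'M[K]_(d l))
  (hrho : forall l, is_repr (rho l)) (hd : forall l, (0 < d l)%N)
  (hWinj : forall h : H, (forall l, rho l h = 0) -> h = 0)
  (hWsurj : forall M : forall l, 'M[K]_(d l), exists h : H, forall l, rho l h = M l)
  (c : L -> K) (hc0 : forall l, c l != 0)
  (hschur : forall h : H, tau h = \sum_(l : L) (c l)^-1 * \tr (rho l h))
  (a : L -> G) (ha : forall l, nu (c l) = - (a l *+ 2))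
  (vp : G -> K)
  (hv : forall g, in_agrp a g -> vp g != 0 /\ nu (vp g) = g)
  (hvhom : forall g1 g2, in_agrp a g1 -> in_agrp a g2 -> vp (g1 + g2) = vp g1 * vp g2)
  (hbal : forall (l : L) (B' : seq H), star_sym_basis tau star B' ->
            forall b, b \in B' -> forall s t,
              val_ge leG nu (rho l b s t) (- a l)).

Let tauL (x : K) u v : tau (x *: u + v) = x * tau u + tau v. Proof. by case: htau => h _ _; apply: h. Qed.
Lemma tau0 : tau 0 = 0.
Proof. have := tauL 1 0 0; rewrite scale1r addr0 mul1r => h.
by apply: (addrI (tau 0)); rewrite addr0 -h. Qed.
Lemma tauD u v : tau (u + v) = tau u + tau v.
Proof. by rewrite -[u]scale1r tauL mul1r scale1r. Qed.
Lemma tauZ x u : tau (x *: u) = x * tau u.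
Proof. by rewrite -[x *: u]addr0 tauL tau0 addr0. Qed.
Lemma tau_sum (I : Type) (r : seq I) (P : pred I) (E : I -> H) :
  tau (\sum_(i <- r | P i) E i) = \sum_(i <- r | P i) tau (E i).
Proof. exact: (big_morph tau tauD tau0). Qed.
Lemma tauC u v : tau (u * v) = tau (v * u). Proof. by case: htau => _ h _; apply: h. Qed.
Lemma tau_nondeg u : (forall v, tau (v * u) = 0) -> u = 0.
Proof. case: htau => _ _ h hu; apply: h => v; by rewrite tauC. Qed.

Let starL (x : K) u v : star (x *: u + v) = x *: star u + star v.
Proof. by case: hstar => h _ _; apply: h. Qed.
Lemma star0 : star 0 = 0.
Proof. have := starL 1 0 0; rewrite scale1r addr0 scale1r => h.
by apply: (addrI (star 0)); rewrite addr0 -h. Qed.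
Lemma starD u v : star (u + v) = star u + star v.
Proof. by rewrite -[u]scale1r starL scale1r scale1r. Qed.
Lemma starZ x u : star (x *: u) = x *: star u.
Proof. by rewrite -[x *: u]addr0 starL star0 addr0. Qed.
Lemma star_sum (I : Type) (r : seq I) (P : pred I) (E : I -> H) :
  star (\sum_(i <- r | P i) E i) = \sum_(i <- r | P i) star (E i).
Proof. exact: (big_morph star starD star0). Qed.
Lemma starM u v : star (u * v) = star v * star u. Proof. by case: hstar => _ h _; apply: h. Qed.
Lemma starK : involutive star. Proof. by case: hstar. Qed.

Let rhoL l (x : K) u v : rho l (x *: u + v) = x *: rho l u + rho l v.
Proof. by case: (hrho l) => h _ _; apply: h. Qed.
Lemma rho0 l : rho l 0 = 0.
Proof. have := rhoL l 1 0 0; rewrite scale1r addr0 scale1r => h.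
by apply: (addrI (rho l 0)); rewrite addr0 -h. Qed.
Lemma rhoD l u v : rho l (u + v) = rho l u + rho l v.
Proof. by rewrite -[u]scale1r rhoL scale1r scale1r. Qed.
Lemma rhoZ l x u : rho l (x *: u) = x *: rho l u.
Proof. by rewrite -[x *: u]addr0 rhoL rho0 addr0. Qed.
Lemma rho_sum l (I : Type) (r : seq I) (P : pred I) (E : I -> H) :
  rho l (\sum_(i <- r | P i) E i) = \sum_(i <- r | P i) rho l (E i).
Proof. exact: (big_morph (rho l) (rhoD l) (rho0 l)). Qed.
Lemma rhoM l u v : rho l (u * v) = rho l u *m rho l v. Proof. by case: (hrho l) => _ h _; apply: h. Qed.

Lemma Buniq : uniq B.
Proof. by case: hB => /basis_free /free_uniq. Qed.
Lemma tnth_inj : injective (tnth B).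
Proof. exact/tuple_uniqP/Buniq. Qed.
Lemma B_orth i j : tau (tnth B i * star (tnth B j)) = (i == j)%:R.
Proof. case: hB => _ _ h; rewrite h ?mem_tnth //.
by rewrite (inj_eq tnth_inj). Qed.
Lemma B_span h : h = \sum_i coord B i h *: tnth B i.
Proof.
case: hB => /andP[/eqP hs _] _ _.
rewrite {1}(@coord_span _ _ _ B h); last by rewrite hs memvf.
by apply: eq_bigr => i _; rewrite (tnth_nth 0).
Qed.
Lemma coordE i h : coord B i h = tau (h * tnth B (st i)).
Proof.
rewrite -hst {2}(B_span h) mulr_suml tau_sum.
rewrite (bigD1 i) //= big1 ?addr0.
  by rewrite -scalerAl tauZ B_orth eqxx mulr1.
by move=> j /negbTE ji; rewrite -scalerAl tauZ B_orth ji mulr0.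
Qed.
Lemma stK : involutive st.
Proof. move=> i; apply: tnth_inj; by rewrite -!hst starK. Qed.

Definition va l := vp (a l).
Definition ff l := vp (a l *+ 2) * c l.
Definition C l i : 'M[F]_(d l) := clam pi (rho l) (va l) (tnth B i).
Definition fb l := pi (ff l).
Definition gam (x y z : 'I_n) := gammaJ pi rho (fun l => vp (a l)) (fun l => vp (a l *+ 2)) c
   (tnth B x) (tnth B y) (tnth B z).

Lemma agrp_a l : in_agrp a (a l).
Proof.
exists (fun m => (m == l)%:R); rewrite (bigD1 l) //= eqxx big1 ?addr0 //.
by move=> m /negbTE ->.
Qed.
Lemma agrp_add g1 g2 : in_agrp a g1 -> in_agrp a g2 -> in_agrp a (g1 + g2).
Proof. move=> [k1 ->] [k2 ->]; exists (fun m => k1 m + k2 m).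
by rewrite -big_split; apply: eq_bigr => m _; rewrite mulrzDr. Qed.
Lemma agrp_opp g : in_agrp a g -> in_agrp a (- g).
Proof. move=> [k ->]; exists (fun m => - k m).
by rewrite -sumrN; apply: eq_bigr => m _; rewrite mulrNz. Qed.

Lemma va_nz l : va l != 0. Proof. by case: (hv (agrp_a l)). Qed.
Lemma nu_va l : nu (va l) = a l. Proof. by case: (hv (agrp_a l)). Qed.
Lemma vaa l : vp (a l *+ 2) = va l * va l.
Proof. by rewrite mulr2n hvhom //; apply: agrp_a. Qed.
Lemma ff_nz l : ff l != 0.
Proof. by rewrite /ff vaa !mulf_neq0 // ?va_nz. Qed.
Lemma nu_ff l : nu (ff l) = 0.
Proof. have h1 : vp (a l *+ 2) != 0 by rewrite vaa mulf_neq0 ?va_nz.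
rewrite /ff nuM // ha.
have [_ ->] := hv (agrp_add (agrp_a l) (agrp_a l)); by rewrite mulr2n subrr.
Qed.
Lemma ffO l : ff l \in O. Proof. by apply/OP; right; rewrite nu_ff. Qed.
Lemma ffVO l : (ff l)^-1 \in O.
Proof. by apply/OP; right; rewrite nuV ?ff_nz // nu_ff oppr0. Qed.
Lemma pi_ffV l : pi (ff l)^-1 * fb l = 1.
Proof. by rewrite /fb -piM ?ffO ?ffVO // mulVf ?ff_nz // pi1. Qed.
Lemma fb_nz l : fb l != 0.
Proof. apply/negP => /eqP h; have := pi_ffV l; rewrite h mulr0 => /eqP.
by rewrite eq_sym oner_eq0. Qed.
Lemma pi_ffVE l : pi (ff l)^-1 = (fb l)^-1.
Proof. by rewrite -[pi _](mulfK (fb_nz l)) pi_ffV mul1r. Qed.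

Lemma vrhoO l i s t : va l * rho l (tnth B i) s t \in O.
Proof.
have := hbal hB (mem_tnth i B) s t; rewrite /val_ge.
move=> [->|h]; first by rewrite mulr0 O0.
have [-> | x0] := eqVneq (rho l (tnth B i) s t) 0; first by rewrite mulr0 O0.
apply/OP; right; rewrite nuM ?va_nz // nu_va.
by have := leGD (a l) h; rewrite addNr addrC.
Qed.

Lemma Cmul_entry l i j s u : va l * va l * rho l (tnth B i * tnth B j) s u =
  \sum_t (va l * rho l (tnth B i) s t) * (va l * rho l (tnth B j) t u).
Proof.
rewrite rhoM mxE mulr_sumr; apply: eq_bigr => t _.
by rewrite mulrACA.
Qed.
Lemma CmulO l i j s u : va l * va l * rho l (tnth B i * tnth B j) s u \in O.
Proof. rewrite Cmul_entry; apply: O_sumO => t _; by rewrite OM ?vrhoO. Qed.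
Lemma CmulE l i j : C l i *m C l j = \matrix_(s,u) pi (va l * va l * rho l (tnth B i * tnth B j) s u).
Proof.
apply/matrixP => s u; rewrite !mxE Cmul_entry pi_sum.
  by apply: eq_bigr => t _; rewrite piMO ?vrhoO // !mxE.
by move=> t _; rewrite OM ?vrhoO.
Qed.
Lemma Cmul0 l i j : tnth B i * tnth B j = 0 -> C l i *m C l j = 0.
Proof. move=> h; rewrite CmulE h rho0; apply/matrixP => s u; by rewrite !mxE mulr0 pi0. Qed.

Lemma gamE x y z : gam x y z = \sum_l (fb l)^-1 * \tr (C l x *m C l y *m C l z).
Proof.
rewrite /gam /gammaJ; apply: eq_bigr => l _; rewrite /mxtrace mulr_sumr; apply: eq_bigr => s _.
rewrite mxE exchange_big mulr_sumr; apply: eq_bigr => u _.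
rewrite mxE [(C l x *m _) s u]mxE mulr_suml mulr_sumr; apply: eq_bigr => t _.
by rewrite !mulrA.
Qed.

Lemma gam_rot x y z : gam x y z = gam y z x.
Proof. rewrite !gamE; apply: eq_bigr => l _; by rewrite -mulmxA mxtrace_mulC. Qed.

Lemma J1 (g : 'I_n -> 'I_n -> 'I_n -> F) u v w :
  Jmul st g u v w = \sum_x \sum_y u x * v y * g x y (st w).
Proof.
rewrite /Jmul; apply: eq_bigr => x _; apply: eq_bigr => y _.
rewrite -big_mkcond (big_pred1 (st w)) // => z /=.
by apply/eqP/eqP => [<-|->]; rewrite ?stK.
Qed.

Lemma J_tJl (g : 'I_n -> 'I_n -> 'I_n -> F) m v w :
  Jmul st g (tJ F m) v w = \sum_y v y * g m y (st w).
Proof.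
rewrite J1 (bigD1 m) //= [X in _ + X]big1 ?addr0.
  by apply: eq_bigr => y _; rewrite /tJ eqxx mul1r.
by move=> x /negbTE xm; apply: big1 => y _; rewrite /tJ xm !mul0r.
Qed.
Lemma J_tJr (g : 'I_n -> 'I_n -> 'I_n -> F) m u w :
  Jmul st g u (tJ F m) w = \sum_x u x * g x m (st w).
Proof.
rewrite J1; apply: eq_bigr => x _; rewrite (bigD1 m) //= [X in _ + X]big1 ?addr0.
  by rewrite /tJ eqxx mulr1.
by move=> y /negbTE ym; rewrite /tJ ym mulr0 mul0r.
Qed.
Lemma J_lin (g : 'I_n -> 'I_n -> 'I_n -> F) u v w :
  Jmul st g u v w = \sum_m u m * Jmul st g (tJ F m) v w.
Proof.
rewrite J1; apply: eq_bigr => x _; rewrite J_tJl mulr_sumr.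
by apply: eq_bigr => y _; rewrite mulrA.
Qed.

Lemma Jleft_H i k : J_left_step st gam i k -> H_left_step B i k.
Proof.
move=> [h hJ]; apply: Classical_Prop.NNPP => hH.
have e h' : coord B i (h' * tnth B k) = 0.
  by case: (eqVneq (coord B i (h' * tnth B k)) 0) => // nz; case: hH; exists h'.
have z0 : tnth B k * tnth B (st i) = 0.
  by apply: tau_nondeg => v; rewrite mulrA -coordE e.
have g0 w : gam w k (st i) = 0.
  rewrite gamE big1 // => l _.
  by rewrite -mulmxA Cmul0 // mulmx0 linear0 mulr0.
move/negP: hJ; apply; rewrite J_tJr big1 // => x _.
by rewrite g0 mulr0.
Qed.

Lemma Jright_H i k : J_right_step st gam i k -> H_right_step B i k.
Proof.
move=> [h hJ]; apply: Classical_Prop.NNPP => hH.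
have e h' : coord B i (tnth B k * h') = 0.
  by case: (eqVneq (coord B i (tnth B k * h')) 0) => // nz; case: hH; exists h'.
have z0 : tnth B (st i) * tnth B k = 0.
  by apply: tau_nondeg => v; rewrite tauC -mulrA tauC -coordE e.
have g0 w : gam k w (st i) = 0.
  rewrite gamE big1 // => l _.
  by rewrite mxtrace_mulC mulmxA Cmul0 // mul0mx linear0 mulr0.
move/negP: hJ; apply; rewrite J_tJl big1 // => y _.
by rewrite g0 mulr0.
Qed.

Lemma J2_H i k : J_twosided_step st gam i k -> clos_trans _ (H_twosided_step B) i k.
Proof.
move=> [h [h' hJ]].
move: hJ; rewrite J_lin.
case: (pickP (fun m => Jmul st gam h (tJ F k) m * Jmul st gam (tJ F m) h' i != 0)) => [m /= hm _ | h0].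
  move: hm; rewrite mulf_eq0 negb_or => /andP[h1 h2].
  have [g hg] : H_left_step B m k by apply: Jleft_H; exists h.
  have [g' hg'] : H_right_step B i m by apply: Jright_H; exists h'.
  apply: (@t_trans _ _ i m k); apply: t_step.
    by exists 1, g'; rewrite mul1r.
  by exists g, 1; rewrite mulr1.
rewrite big1 ?eqxx // => m _; by apply/eqP; move/negbT: (h0 m); rewrite negbK.
Qed.

Lemma ct_map (T : Type) (R S : T -> T -> Prop) :
  (forall x y, R x y -> clos_trans _ S x y) -> forall x y, clos_trans _ R x y -> clos_trans _ S x y.
Proof.
move=> hRS x y; elim=> [u v /hRS //| u v w _ IH1 _ IH2]; exact: t_trans IH1 IH2.
Qed.

Definition Emx (l : L) (s t : nat) (l' : L) : 'M[K]_(d l') :=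
  \matrix_(p, q) ((l' == l) && (p == s :> nat) && (q == t :> nat))%:R.

Lemma Emx_neq l s t l' : l' != l -> Emx l s t l' = 0.
Proof. by move=> /negbTE h; apply/matrixP => p q; rewrite !mxE h. Qed.

Lemma tr_delta (R : pzRingType) m (p q : 'I_m) (X : 'M[R]_m) :
  \tr (\matrix_(i, j) ((i == p :> nat) && (j == q :> nat))%:R *m X) = X q p.
Proof.
rewrite /mxtrace (bigD1 p) //= [X in _ + X]big1 ?addr0.
  rewrite mxE (bigD1 q) //= [X in _ + X]big1 ?addr0.
    by rewrite mxE !eqxx mul1r.
  by move=> j /negbTE jq; rewrite mxE eqxx (inj_eq val_inj) jq mul0r.
move=> i /negbTE ip; rewrite mxE big1 // => j _.
by rewrite mxE (inj_eq val_inj) ip mul0r.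
Qed.

Lemma tau_E l (s t : 'I_(d l)) h x : (forall l', rho l' h = Emx l s t l') ->
  tau (h * x) = (c l)^-1 * rho l x t s.
Proof.
move=> hh; rewrite hschur (bigD1 l) //= [X in _ + X]big1 ?addr0.
  rewrite rhoM hh; congr (_ * _).
  rewrite -(tr_delta s t); congr (\tr (_ *m _)).
  by apply/matrixP => p q; rewrite !mxE eqxx.
by move=> l' nl; rewrite rhoM hh Emx_neq // mul0mx linear0 mulr0.
Qed.

Lemma orthoH l m (s t : 'I_(d l)) (u v : 'I_(d m)) :
  \sum_i rho l (tnth B (st i)) t s * rho m (tnth B i) u v =
    c l * ((m == l) && (u == s :> nat) && (v == t :> nat))%:R.
Proof.
have [h hh] := hWsurj (Emx l s t).
have e1 : Emx l s t m u v = (c l)^-1 * \sum_i rho l (tnth B (st i)) t s * rho m (tnth B i) u v.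
  rewrite -hh {1}(B_span h) rho_sum summxE mulr_sumr; apply: eq_bigr => i _.
  by rewrite rhoZ mxE coordE (tau_E _ hh) mulrA.
move: e1; rewrite mxE => ->; by rewrite mulrA divff ?hc0 // mul1r.
Qed.

Lemma Cortho l m (s t : 'I_(d l)) (u v : 'I_(d m)) :
  \sum_i C l (st i) t s * C m i u v =
    fb l * ((m == l) && (u == s :> nat) && (v == t :> nat))%:R.
Proof.
have e : \sum_i C l (st i) t s * C m i u v =
   pi (va l * va m * \sum_i rho l (tnth B (st i)) t s * rho m (tnth B i) u v).
  rewrite mulr_sumr pi_sum; last by move=> i _; rewrite mulrACA OM ?vrhoO.
  by apply: eq_bigr => i _; rewrite !mxE -piMO ?vrhoO // mulrACA.
rewrite e orthoH; case hb : (_ && _).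
  move: hb => /andP[/andP[/eqP eml _] _]; subst m.
  by rewrite /fb /ff vaa !mulr1.
by rewrite !mulr0 pi0.
Qed.

Lemma trace1 x : \sum_l (fb l)^-1 * \tr (C l x *m C l (st x)) = 1.
Proof.
have h1 : tau (tnth B x * tnth B (st x)) = 1 by rewrite -hst B_orth eqxx.
rewrite -pi1 -h1 hschur.
have e l : (c l)^-1 * \tr (rho l (tnth B x * tnth B (st x))) =
    (ff l)^-1 * \sum_s va l * va l * rho l (tnth B x * tnth B (st x)) s s.
  rewrite /ff vaa /mxtrace -mulr_sumr mulrA; congr (_ * _).
  have := va_nz l; have := hc0 l; move: (va l) (c l) => w cc w0 c0.
  by rewrite !invfM; field; rewrite c0 w0.
rewrite (eq_bigr _ (fun l _ => e l)).
rewrite pi_sum; last by move=> l _; rewrite OM ?ffVO // O_sumO // => s _; exact: CmulO.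
apply: eq_bigr => l _; rewrite piMO ?ffVO ?O_sumO // => [|s _]; last exact: CmulO.
rewrite pi_ffVE pi_sum; last by move=> s _; exact: CmulO.
by congr (_ * _); rewrite /mxtrace; apply: eq_bigr => s _; rewrite CmulE mxE.
Qed.

Definition Phi l (h : 'I_n -> F) : 'M[F]_(d l) := \sum_i h i *: C l i.

Lemma trPhi l u v (Z : 'M[F]_(d l)) :
  \tr (Phi l u *m Phi l v *m Z) = \sum_x \sum_y u x * v y * \tr (C l x *m C l y *m Z).
Proof.
rewrite /Phi mulmx_suml mulmx_suml linear_sum; apply: eq_bigr => x _.
rewrite mulmx_sumr mulmx_suml linear_sum; apply: eq_bigr => y _.
by rewrite -scalemxAl -scalemxAr -!scalemxAl !linearZ /= mulrA.
Qed.

Lemma J_tr u v w : Jmul st gam u v w = \sum_l (fb l)^-1 * \tr (Phi l u *m Phi l v *m C l (st w)).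
Proof.
symmetry; transitivity (\sum_l \sum_x \sum_y u x * v y * ((fb l)^-1 * \tr (C l x *m C l y *m C l (st w)))).
  apply: eq_bigr => l _; rewrite trPhi mulr_sumr; apply: eq_bigr => x _.
  by rewrite mulr_sumr; apply: eq_bigr => y _; rewrite mulrCA.
rewrite J1 exchange_big; apply: eq_bigr => x _; rewrite exchange_big; apply: eq_bigr => y _.
by rewrite gamE mulr_sumr.
Qed.

Lemma Phi_tJ l m : Phi l (tJ F m) = C l m.
Proof.
rewrite /Phi (bigD1 m) //= [X in _ + X]big1 ?addr0; first by rewrite /tJ eqxx scale1r.
by move=> i /negbTE im; rewrite /tJ im scale0r.
Qed.

Definition Fmx (m : L) (p q : nat) (l : L) : 'M[F]_(d l) :=
  \matrix_(i, j) ((l == m) && (i == p :> nat) && (j == q :> nat))%:R.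

Lemma Fmx_neq m p q l : l != m -> Fmx m p q l = 0.
Proof. by move=> /negbTE h; apply/matrixP => i j; rewrite !mxE h. Qed.

Lemma Esurj m (p q : 'I_(d m)) : exists h, forall l, Phi l h = Fmx m p q l.
Proof.
exists (fun w => (fb m)^-1 * C m (st w) q p) => l.
apply/matrixP => i j; rewrite summxE.
transitivity ((fb m)^-1 * \sum_w C m (st w) q p * C l w i j).
  by rewrite mulr_sumr; apply: eq_bigr => w _; rewrite mxE mulrA.
by rewrite Cortho mulKf ?fb_nz // mxE.
Qed.

Lemma sum_delta2 m (N : 'M[F]_m) (p q : 'I_m) (x : F) :
  \sum_s \sum_t N s t * (x * ((p == s :> nat) && (q == t :> nat))%:R) = N p q * x.
Proof.
rewrite (bigD1 p) //= [X in _ + X]big1 ?addr0.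
  rewrite (bigD1 q) //= [X in _ + X]big1 ?addr0; first by rewrite !eqxx mulr1.
  by move=> t /negbTE qt; rewrite eqxx eq_sym (inj_eq val_inj) qt mulr0 mulr0.
move=> s /negbTE ps; apply: big1 => t _.
by rewrite eq_sym (inj_eq val_inj) ps mulr0 mulr0.
Qed.

Lemma SumTr l m (N : 'M[F]_(d l)) (p q : 'I_(d m)) :
  \sum_w (fb l)^-1 * \tr (N *m C l (st w)) * C m w p q =
  (fb l)^-1 * \sum_s \sum_t N s t * (fb l * ((m == l) && (p == s :> nat) && (q == t :> nat))%:R).
Proof.
under eq_bigr do rewrite -mulrA.
rewrite -mulr_sumr; congr (_ * _).
transitivity (\sum_w \sum_s \sum_t N s t * C l (st w) t s * C m w p q).
  apply: eq_bigr => w _; rewrite /mxtrace mulr_suml; apply: eq_bigr => s _.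
  by rewrite mxE mulr_suml.
rewrite exchange_big; apply: eq_bigr => s _; rewrite exchange_big; apply: eq_bigr => t _.
by rewrite -Cortho mulr_sumr; apply: eq_bigr => w _; rewrite mulrA.
Qed.

Lemma Phi_mul m u v : Phi m (Jmul st gam u v) = Phi m u *m Phi m v.
Proof.
apply/matrixP => p q; rewrite summxE.
under eq_bigr do rewrite mxE J_tr mulr_suml.
rewrite exchange_big /= (bigD1 m) //= [X in _ + X]big1 ?addr0.
  by rewrite SumTr eqxx /= sum_delta2 mulrCA mulVf ?fb_nz // mulr1.
move=> l nlm; rewrite SumTr eq_sym (negbTE nlm) /=.
rewrite big1 ?mulr0 // => s _; by rewrite big1 // => t _; rewrite mulr0.
Qed.

Lemma ord_neqn k (i j : 'I_k) : i != j -> (i == j :> nat) = false.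
Proof. by move=> h; apply/negbTE; rewrite (inj_eq val_inj). Qed.

Lemma Dmul_entry k (p q : 'I_k) (X : 'M[F]_k) i j :
  (\matrix_(i0 < k, j0 < k) ((i0 == p :> nat) && (j0 == q :> nat))%:R *m X) i j = (i == p :> nat)%:R * X q j.
Proof.
rewrite mxE (bigD1 q) //= [X in _ + X]big1 ?addr0.
  by rewrite mxE eqxx andbT.
by move=> j0 jq; rewrite mxE (ord_neqn jq) andbF mul0r.
Qed.

Lemma trEXEX k (p q : 'I_k) (X : 'M[F]_k) :
  let D := \matrix_(i0 < k, j0 < k) ((i0 == p :> nat) && (j0 == q :> nat))%:R in
  \tr (D *m X *m D *m X) = X q p * X q p.
Proof.
move=> D; rewrite -!mulmxA tr_delta mxE (bigD1 p) //= [X in _ + X]big1 ?addr0.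
  by rewrite Dmul_entry eqxx mul1r.
by move=> i ip; rewrite Dmul_entry (ord_neqn ip) mul0r mulr0.
Qed.

Lemma exists_nz_entry (R : pzRingType) k k' (X : 'M[R]_(k, k')) : X != 0 -> exists i j, X i j != 0.
Proof.
move=> nz; case: (pickP (fun ij : 'I_k * 'I_k' => X ij.1 ij.2 != 0)) => [[i j] /= h|h0].
  by exists i, j.
case/eqP: nz; apply/matrixP => i j; rewrite mxE.
by have := h0 (i, j); rewrite /= => /negbFE/eqP.
Qed.

Lemma J2_star x : J_twosided_step st gam (st x) x.
Proof.
have [m Cm] : exists m, C m x != 0.
  case: (pickP (fun l => C l x != 0)) => [l h|h0]; first by exists l.
  have := trace1 x; rewrite big1 => [/eqP|l _]; first by rewrite eq_sym oner_eq0.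
  by have := h0 l; rewrite /= => /negbFE/eqP ->; rewrite mul0mx linear0 mulr0.
have [a0 [b0 hab]] := exists_nz_entry Cm.
have [h hh] := Esurj b0 a0.
exists h, h; rewrite J_tr; under eq_bigr do rewrite Phi_mul Phi_tJ stK.
rewrite (bigD1 m) //= [X in _ + X]big1 ?addr0.
  have -> : Phi m h = \matrix_(i0 < d m, j0 < d m) ((i0 == b0 :> nat) && (j0 == a0 :> nat))%:R.
    by rewrite hh; apply/matrixP => i j; rewrite !mxE eqxx.
  by rewrite trEXEX mulf_neq0 ?invr_eq0 ?fb_nz ?mulf_neq0.
by move=> l nlm; rewrite hh Fmx_neq // !mul0mx linear0 mulr0.
Qed.

Lemma part_d x : cells_of (J_twosided_step st gam) x (st x).
Proof.
split; apply: t_step; last exact: J2_star.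
by have := J2_star (st x); rewrite stK.
Qed.

Lemma rhoN l u : rho l (- u) = - rho l u.
Proof. by rewrite -scaleN1r rhoZ scaleN1r. Qed.

Lemma OmegaK l : exists m (Om : 'M[K]_(d m, d l)), Om != 0 /\
  forall h, Om *m rho l h = (rho m (star h))^T *m Om.
Proof.
pose j0 := Ordinal (hd l).
have [E hE] := @fin_all_exists ('I_(d l)) (fun=> H)
   (fun i e => forall l', rho l' e = Emx l i j0 l') (fun i => hWsurj (Emx l i j0)).
have hEm h j : h * E j = \sum_i rho l h i j *: E i.
  apply/eqP; rewrite -subr_eq0; apply/eqP; apply: hWinj => l'.
  rewrite rhoD rhoN rhoM hE rho_sum; apply/eqP; rewrite subr_eq0; apply/eqP.
  under eq_bigr do rewrite rhoZ hE.
  have [el|nl] := eqVneq l' l; last first.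
    by rewrite Emx_neq // mulmx0 big1 // => i _; rewrite Emx_neq // scaler0.
  subst l'; apply/matrixP => p q; rewrite mxE summxE.
  rewrite (bigD1 j) //= [X in _ + X]big1 ?addr0; last first.
    by move=> k kj; rewrite mxE eqxx (ord_neqn kj) /= mulr0.
  rewrite (bigD1 p) //= [X in _ = _ + X]big1 ?addr0; last first.
    move=> i ip; have ip' : p != i by rewrite eq_sym.
    by rewrite !mxE eqxx (ord_neqn ip') /= mulr0.
  by rewrite !mxE !eqxx /=; case: (q == j0 :> nat); rewrite ?mulr1 ?mulr0.
have e0 : E j0 != 0.
  apply/negP => /eqP e0; have := hE j0 l; rewrite e0 rho0 => /matrixP/(_ j0 j0).
  by rewrite !mxE !eqxx /= => /eqP; rewrite eq_sym oner_eq0.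
have se0 : star (E j0) != 0.
  by apply: contraNneq e0 => h; rewrite -[E j0]starK h star0.
have [m rm] : exists m, rho m (star (E j0)) != 0.
  case: (pickP (fun m => rho m (star (E j0)) != 0)) => [m h|h0]; first by exists m.
  case/negP: se0; apply/eqP; apply: hWinj => m.
  by have := h0 m; rewrite /= => /negbFE/eqP.
have [p0 [q0 hpq]] : exists p0 q0, (rho m (star (E j0)))^T p0 q0 != 0.
  by apply: exists_nz_entry; rewrite trmx_eq0.
exists m, (\matrix_(p, i) (rho m (star (E i)))^T p q0); split.
  apply/negP => /eqP/matrixP/(_ p0 j0); rewrite !mxE => h0; move: hpq; by rewrite mxE h0 eqxx.
move=> h.
have key j : rho m (star (E j)) *m rho m (star h) = \sum_i rho l h i j *: rho m (star (E i)).
  rewrite -rhoM -starM hEm star_sum rho_sum; apply: eq_bigr => i _.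
  by rewrite starZ rhoZ.
apply/matrixP => p j; rewrite !mxE.
transitivity ((rho m (star (E j)) *m rho m (star h)) q0 p).
  rewrite key summxE; apply: eq_bigr => i _; by rewrite !mxE mulrC.
by rewrite mxE; apply: eq_bigr => k _; rewrite !mxE mulrC.
Qed.

Lemma min_exists (T : finType) (P : pred T) (g : T -> G) :
  (exists t, P t) -> exists t, P t /\ forall t', P t' -> leG (g t) (g t').
Proof.
move=> [t0 Pt0].
have gen (s : seq T) : (exists t, (t \in s) && P t) ->
    exists t, P t /\ forall t', t' \in s -> P t' -> leG (g t) (g t').
  elim: s => [|x s IH] [t ht]; first by rewrite in_nil in ht.
  case hs: (has P s).
    have [t1 [Pt1 m1]] : exists t, P t /\ forall t', t' \in s -> P t' -> leG (g t) (g t').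
      by apply: IH; case/hasP: hs => u us Pu; exists u; rewrite us Pu.
    case Px: (P x); last first.
      exists t1; split => // t'; rewrite in_cons => /orP[/eqP->|]; first by rewrite Px.
      exact: m1.
    case/orP: (leGtot (g t1) (g x)) => hle.
      exists t1; split => // t'; rewrite in_cons => /orP[/eqP->//|]; exact: m1.
    exists x; split => // t'; rewrite in_cons => /orP[/eqP->|t's Pt']; first by move=> _; apply: leGrefl.
    exact: leGtrans hle (m1 _ t's Pt').
  have Px : P x.
    move: ht; rewrite in_cons => /andP[/orP[/eqP<-//|ts] Pt].
    by move/negbT: hs => /hasPn/(_ _ ts); rewrite Pt.
  exists x; split => // t'; rewrite in_cons => /orP[/eqP->|t's Pt']; first by move=> _; apply: leGrefl.
  by move/negbT: hs => /hasPn/(_ _ t's); rewrite Pt'.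
have [t [Pt mt]] := gen (enum T) (ex_intro _ t0 (introT andP (conj (mem_enum _ t0) Pt0))).
by exists t; split => // t' Pt'; apply: mt; rewrite ?mem_enum.
Qed.

Lemma mulD_entry k' k (X : 'M[F]_(k', k)) (p q : 'I_k) r j :
  (X *m \matrix_(i0 < k, j0 < k) ((i0 == p :> nat) && (j0 == q :> nat))%:R) r j =
  X r p * (j == q :> nat)%:R.
Proof.
rewrite mxE (bigD1 p) //= [X in _ + X]big1 ?addr0; first by rewrite mxE eqxx.
by move=> i ip; rewrite mxE (ord_neqn ip) /= mulr0.
Qed.

Lemma OmegaF l : exists m (Ob : 'M[F]_(d m, d l)) (k : F),
   (forall i, Ob *m C l i = k *: ((C m (st i))^T *m Ob)) /\
   (forall M : 'M[F]_(d l), Ob *m M = 0 -> M = 0).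
Proof.
have [m [Om [nz rel]]] := OmegaK l.
have [[p1 q1] [/= h1 hmin]] := @min_exists _ (fun ij : 'I_(d m) * 'I_(d l) => Om ij.1 ij.2 != 0)
   (fun ij => nu (Om ij.1 ij.2)) (let: ex_intro i (ex_intro j h) := exists_nz_entry nz in
      ex_intro _ (i, j) h).
pose z := Om p1 q1.
pose Om' := z^-1 *: Om.
have O'O p q : Om' p q \in O.
  rewrite mxE; have [->|nz'] := eqVneq (Om p q) 0; first by rewrite mulr0 O0.
  apply/OP; right; rewrite nuM ?invr_neq0 // nuV // addrC; apply: leG_subr.
  exact: (hmin (p, q)).
have rel' h : Om' *m rho l h = (rho m (star h))^T *m Om'.
  by rewrite -scalemxAl rel scalemxAr.
pose Ob := \matrix_(p, q) pi (Om' p q).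
have Ob1 : Ob p1 q1 = 1 by rewrite !mxE mulVf // pi1.
have red (al be : K) : al \in O -> be \in O -> al * va l = be * va m ->
    forall i, pi al *: (Ob *m C l i) = pi be *: ((C m (st i))^T *m Ob).
  move=> hal hbe hab i; apply/matrixP => p j.
  have e : (Om' *m rho l (tnth B i)) p j = ((rho m (star (tnth B i)))^T *m Om') p j.
    by rewrite rel'.
  rewrite hst in e.
  have hL : (pi al *: (Ob *m C l i)) p j = pi (al * va l * (Om' *m rho l (tnth B i)) p j).
    rewrite [(pi al *: (Ob *m C l i)) p j]mxE [(Ob *m C l i) p j]mxE [(Om' *m rho l (tnth B i)) p j]mxE.
    rewrite !mulr_sumr pi_sum; last first.
      move=> k _; rewrite -mulrA [va l * _]mulrCA.
      by apply: OM => //; apply: OM; [exact: O'O | exact: vrhoO].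
    apply: eq_bigr => k _.
    rewrite -mulrA [va l * _]mulrCA.
    rewrite piMO //; last by apply: OM; [exact: O'O | exact: vrhoO].
    by rewrite piMO ?O'O ?vrhoO // !mxE.
  have hR : (pi be *: ((C m (st i))^T *m Ob)) p j =
      pi (be * va m * ((rho m (tnth B (st i)))^T *m Om') p j).
    rewrite [(pi be *: ((C m (st i))^T *m Ob)) p j]mxE [((C m (st i))^T *m Ob) p j]mxE [((rho m (tnth B (st i)))^T *m Om') p j]mxE.
    rewrite !mulr_sumr pi_sum; last first.
      move=> k _; rewrite mxE.
      rewrite -mulrA [va m * _]mulrA.
      by apply: OM => //; apply: OM; [exact: vrhoO | exact: O'O].
    apply: eq_bigr => k _; rewrite [(rho m (tnth B (st i)))^T p k]mxE.
    rewrite -mulrA [va m * _]mulrA.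
    rewrite piMO //; last by apply: OM; [exact: vrhoO | exact: O'O].
    by rewrite piMO ?O'O ?vrhoO // !mxE.
  by rewrite hL hR e hab.
have hg : in_agrp a (a l - a m) := agrp_add (agrp_a l) (agrp_opp (agrp_a m)).
have [ka [kb [hk hk1]]] : exists ka kb : F,
    (forall i, ka *: (Ob *m C l i) = kb *: ((C m (st i))^T *m Ob)) /\ (ka = 1 \/ kb = 1).
  case/orP: (leGtot 0 (a l - a m)) => hle.
    exists (pi 1), (pi (vp (a l - a m))); split; last by left; rewrite pi1.
    apply: red; first exact: O1.
      by apply/OP; right; have [_ ->] := hv hg.
    have e1 := hvhom hg (agrp_a m); rewrite subrK in e1.
    by rewrite mul1r /va e1.
  exists (pi (vp (- (a l - a m)))), (pi 1); split; last by right; rewrite pi1.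
  apply: red; last first.
  - have e2 := hvhom (agrp_opp hg) (agrp_a l); rewrite opprB subrK in e2.
    by rewrite mul1r /va e2 opprB.
  - exact: O1.
  - by apply/OP; right; have [_ ->] := hv (agrp_opp hg); exact: leG_opp.
have ka0 : ka != 0.
  apply/negP => /eqP ka0.
  have kb1 : kb = 1.
    by case: hk1 => // ka1; move: ka0; rewrite ka1 => /eqP; rewrite oner_eq0.
  have h0 w : (C m w)^T *m Ob = 0.
    by have := hk (st w); rewrite ka0 kb1 scale0r scale1r stK.
  have [h hh] := Esurj p1 p1.
  have e3 : \sum_k (Phi m h) k p1 * Ob k q1 = 0.
    transitivity (\sum_w h w * ((C m w)^T *m Ob) p1 q1); last first.
      by apply: big1 => w _; rewrite h0 mxE mulr0.
    under eq_bigr do rewrite summxE mulr_suml.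
    rewrite exchange_big; apply: eq_bigr => w _; rewrite mxE mulr_sumr.
    by apply: eq_bigr => k _; rewrite !mxE mulrA.
  move: e3; rewrite hh (bigD1 p1) //= [X in _ + X]big1 ?addr0.
    by rewrite !mxE !eqxx /= mul1r mulVf // pi1 => /eqP; rewrite oner_eq0.
  by move=> k kp; rewrite mxE (ord_neqn kp) andbF /= mul0r.
have rel2 i : Ob *m C l i = (kb / ka) *: ((C m (st i))^T *m Ob).
  by rewrite -(scalerK ka0 (Ob *m C l i)) hk scalerA mulrC.
exists m, Ob, (kb / ka); split => // M hM.
apply/matrixP => r j; rewrite [RHS]mxE.
case: (eqVneq (M r j) 0) => // nzM; exfalso.
have [h hh] := Esurj q1 r.
have e1 : Ob *m Phi l h *m M = 0.
  rewrite /Phi mulmx_sumr mulmx_suml big1 // => i _.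
  by rewrite -scalemxAr -scalemxAl rel2 -scalemxAl -mulmxA hM mulmx0 !scaler0.
have e2 : (Ob *m Phi l h *m M) p1 j = M r j.
  have -> : Phi l h = \matrix_(i0 < d l, j0 < d l) ((i0 == q1 :> nat) && (j0 == r :> nat))%:R.
    by rewrite hh; apply/matrixP => i0 j0; rewrite !mxE eqxx.
  rewrite -mulmxA mxE (bigD1 q1) //= Dmul_entry eqxx mul1r Ob1 mul1r big1 ?addr0 // => k kq.
  by rewrite Dmul_entry (ord_neqn kq) mul0r mulr0.
by move: nzM; rewrite -e2 e1 mxE eqxx.
Qed.

Lemma nz_swap l x y : C l x *m C l y != 0 -> exists m, C m (st y) *m C m (st x) != 0.
Proof.
have [m [Ob [k [rel inj]]]] := OmegaF l.
move=> nz; exists m; apply: contraNneq nz => N0; apply/eqP; apply: inj.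
rewrite mulmxA rel -scalemxAl -mulmxA rel -scalemxAr mulmxA -trmx_mul N0 trmx0 mul0mx.
by rewrite !scaler0.
Qed.

Lemma A1 x y z : gam x y z != 0 -> cells_of (J_left_step st gam) x (st y).
Proof.
move=> g0; split; apply: t_step.
  have [l hl] : exists l, C l x *m C l y != 0.
    case: (pickP (fun l => C l x *m C l y != 0)) => [l h|h0]; first by exists l.
    case/negP: g0; rewrite gamE big1 // => l _.
    by have := h0 l; rewrite /= => /negbFE/eqP ->; rewrite mul0mx linear0 mulr0.
  have [m hm] := nz_swap hl.
  have [q [p hqp]] := exists_nz_entry hm.
  have [h hh] := Esurj p q.
  exists h; rewrite J_tr; under eq_bigr do rewrite Phi_tJ.
  rewrite (bigD1 m) //= [X in _ + X]big1 ?addr0; last first.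
    by move=> l' nl; rewrite hh Fmx_neq // !mul0mx linear0 mulr0.
  have -> : Phi m h = \matrix_(i0 < d m, j0 < d m) ((i0 == p :> nat) && (j0 == q :> nat))%:R.
    by rewrite hh; apply/matrixP => i j; rewrite !mxE eqxx.
  by rewrite -mulmxA tr_delta mulf_neq0 ?invr_eq0 ?fb_nz.
exists (tJ F z); rewrite J_tJl (bigD1 x) //= [X in _ + X]big1 ?addr0.
  by rewrite /tJ eqxx mul1r stK -gam_rot -gam_rot.
by move=> y' /negbTE yx; rewrite /tJ yx mul0r.
Qed.

Lemma partA x y z : gam x y z != 0 ->
  [/\ cells_of (J_left_step st gam) x (st y),
      cells_of (J_left_step st gam) y (st z) &
      cells_of (J_left_step st gam) z (st x)].
Proof.
move=> g0; split.
- exact: (A1 g0).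
- by apply: (@A1 y z x); rewrite -gam_rot.
- by apply: (@A1 z x y); rewrite gam_rot.
Qed.

Lemma main_sec : forall x y z : 'I_n,
    (gam x y z != 0 ->
       [/\ cells_of (J_left_step st gam) x (st y),
           cells_of (J_left_step st gam) y (st z) &
           cells_of (J_left_step st gam) z (st x)])
    /\ (cells_of (J_left_step st gam) x y -> cells_of (H_left_step B) x y)
    /\ (cells_of (J_right_step st gam) x y -> cells_of (H_right_step B) x y)
    /\ (cells_of (J_twosided_step st gam) x y -> cells_of (H_twosided_step B) x y)
    /\ cells_of (J_twosided_step st gam) x (st x).
Proof.
move=> x y z; split; first exact: partA.
split.
  have hs : forall u v, J_left_step st gam u v -> clos_trans _ (H_left_step B) u v.
    by move=> u v /Jleft_H; apply: t_step.
  by move=> [h1 h2]; split; apply: (ct_map hs).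
split.
  have hs : forall u v, J_right_step st gam u v -> clos_trans _ (H_right_step B) u v.
    by move=> u v /Jright_H; apply: t_step.
  by move=> [h1 h2]; split; apply: (ct_map hs).
split; last exact: part_d.
by move=> [h1 h2]; split; apply: (ct_map J2_H).
Qed.
End Main.
Theorem mainTheorem10
  (* totally ordered abelian group Gamma, field K with surjective valuation nu *)
  (G : zmodType) (leG : rel G) (hG : ordered_abelian_group leG)
  (K : fieldType) (nu : K -> G) (hnu : surj_valuation leG nu)
  (* formally real residue field F = O/m, with reduction map pi : O -> F *)
  (F : fieldType) (pi : K -> F) (hpi : residue_map leG nu pi)
  (hF : formally_real F)
  (* symmetric algebra H with trace tau and involution star *)
  (H : falgType K) (tau : H -> K) (htau : is_trace_form tau)
  (star : H -> H) (hstar : is_lin_invol_antiaut star)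
  (* *-symmetric basis B = (B_0,...,B_{n-1}); st i is the index of B_i^* *)
  (n : nat) (B : n.-tuple H) (hB : star_sym_basis tau star B)
  (st : 'I_n -> 'I_n) (hst : forall i, star (tnth B i) = tnth B (st i))
  (* split semisimple: rho_l (l in L) are a complete set of pairwise
     non-isomorphic irreducible representations (Wedderburn isomorphism) *)
  (L : finType) (d : L -> nat) (rho : forall l, H -> 'M[K]_(d l))
  (hrho : forall l, is_repr (rho l)) (hd : forall l, (0 < d l)%N)
  (hWinj : forall h : H, (forall l, rho l h = 0) -> h = 0)
  (hWsurj : forall M : forall l, 'M[K]_(d l), exists h : H, forall l, rho l h = M l)
  (* Schur elements: tau = sum_l c_l^{-1} chi_l *)
  (c : L -> K) (hc0 : forall l, c l != 0)
  (hschur : forall h : H, tau h = \sum_(l : L) (c l)^-1 * \tr (rho l h))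
  (* a_l = -1/2 nu(c_l) *)
  (a : L -> G) (ha : forall l, nu (c l) = - (a l *+ 2))
  (* gamma |-> v^gamma, a homomorphism on <a_l> with nu(v^gamma) = gamma *)
  (vp : G -> K)
  (hv : forall g, in_agrp a g -> vp g != 0 /\ nu (vp g) = g)
  (hvhom : forall g1 g2, in_agrp a g1 -> in_agrp a g2 -> vp (g1 + g2) = vp g1 * vp g2)
  (* the rho_l are balanced *)
  (hbal : forall (l : L) (B' : seq H), star_sym_basis tau star B' ->
            forall b, b \in B' -> forall s t,
              val_ge leG nu (rho l b s t) (- a l)) :
  let gam := fun x y z : 'I_n =>
    gammaJ pi rho (fun l => vp (a l)) (fun l => vp (a l *+ 2)) c
           (tnth B x) (tnth B y) (tnth B z) in
  forall x y z : 'I_n,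
    (* (a) *)
    (gam x y z != 0 ->
       [/\ cells_of (J_left_step st gam) x (st y),
           cells_of (J_left_step st gam) y (st z) &
           cells_of (J_left_step st gam) z (st x)])
    (* (b) *)
    /\ (cells_of (J_left_step st gam) x y -> cells_of (H_left_step B) x y)
    (* (c) *)
    /\ (cells_of (J_right_step st gam) x y -> cells_of (H_right_step B) x y)
    /\ (cells_of (J_twosided_step st gam) x y -> cells_of (H_twosided_step B) x y)
    (* (d) *)
    /\ cells_of (J_twosided_step st gam) x (st x).
Proof.
move=> gam x y z.
exact: (main_sec hG hnu hpi htau hstar hB hst hrho hd hWinj hWsurj hc0 hschur ha hv hvhom hbal x y z).
Qed.
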